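(* Let $\mathcal{G}=(\mathcal{N},\mathcal{E})$ be a connected meshed graph (containing at least one cycle) with $N$ nodes and $E$ edges, and let $A\in\mathbb{R}^{E\times N}$ be its edge-node incidence matrix. Let $f\in\mathbb{R}^E$. Then there exist $x\in\mathbb{R}^E$ with $x>\mathbf{0}$ (entrywise) and $\theta\in\mathbb{R}^N$ such that $$\operatorname{diag}(f)\,x=A\theta$$ if and only if for every $n\in\operatorname{null}(A^\top)$ one of the following holds: (1) $f\odot n=\mathbf{0}$; or (2) there exist indices $i,j$ such that $(f\odot n)_i>0$ and $(f\odot n)_j<0$.
   Context: Incidence matrix: after assigning an arbitrary direction $e=(m,n)$ to each edge, $A_{e,k}=+1$ if $k=m$, $A_{e,k}=-1$ if $k=n$, and $A_{e,k}=0$ otherwise. $\odot$ denotes the entrywise product of vectors, and $\operatorname{diag}(v)$ the diagonal matrix with diagonal $v$. $\operatorname{null}(A^\top)=\{n\in\mathbb{R}^E: A^\top n=\mathbf{0}\}$. *)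

(* Defs.v *)
From HB Require Import structures.
From mathcomp Require Import all_boot all_order all_algebra.
Set Implicit Arguments. Unset Strict Implicit. Unset Printing Implicit Defensive.
Import Order.TTheory GRing.Theory Num.Theory.
Local Open Scope ring_scope.

(* A graph with nodes 'I_N and edges 'I_E; each edge e is given an
   (arbitrary) direction e = (src e, dst e). *)

Definition simple_graph (N E : nat) (src dst : 'I_E -> 'I_N) : Prop :=
  (forall e, src e != dst e) /\
  (forall e e', ((src e == src e') && (dst e == dst e')) ||
                ((src e == dst e') && (dst e == src e')) -> e = e').

Definition adj (N E : nat) (src dst : 'I_E -> 'I_N) : rel 'I_N :=
  fun k l => [exists e, ((src e == k) && (dst e == l)) ||
                        ((src e == l) && (dst e == k))].

Definition graph_connected (N E : nat) (src dst : 'I_E -> 'I_N) : Prop :=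
  forall k l : 'I_N, connect (adj src dst) k l.

Definition has_cycle (N E : nat) (src dst : 'I_E -> 'I_N) : Prop :=
  exists s : seq 'I_N, [/\ 3 <= size s, uniq s & cycle (adj src dst) s]%N.

Definition incidence (R : nzRingType) (N E : nat) (src dst : 'I_E -> 'I_N)
  : 'M[R]_(E, N) :=
  \matrix_(e < E, k < N)
    (if k == src e then 1 else if k == dst e then -1 else 0).

Definition hadamard (R : nzRingType) (E : nat) (u v : 'cV[R]_E) : 'cV[R]_E :=
  \col_(i < E) (u i 0 * v i 0).

Definition diagc (R : nzRingType) (E : nat) (v : 'cV[R]_E) : 'M[R]_E :=
  diag_mx v^T.

(* Main.v *)
Require Import Defs.
From HB Require Import structures.
From mathcomp Require Import all_boot all_order all_algebra.
From mathcomp Require Import lra.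
Import Order.TTheory GRing.Theory Num.Theory.
Local Open Scope ring_scope.
Set Implicit Arguments. Unset Strict Implicit.

Section P.
Variables (R : realFieldType) (N E : nat) (src dst : 'I_E -> 'I_N) (f : 'cV[R]_E).
Hypothesis sd : forall e, src e != dst e.
Let A := incidence R src dst.
Definition dl (k : 'I_N) : 'cV[R]_N := delta_mx k 0.

Lemma AT_delta e : A^T *m delta_mx e 0 = dl (src e) - dl (dst e).
Proof.
apply/matrixP => k j; rewrite !mxE (bigD1 e) //= big1 ?addr0; last first.
  by move=> i /negbTE ie; rewrite !mxE ie mulr0.
rewrite !mxE eqxx (ord1 j) eqxx !andbT mulr1.
case: (k =P src e) => [->|_]; first by rewrite (negbTE (sd e)) subr0.
case: (k =P dst e) => _ /=; [exact: (esym (sub0r _)) | exact: (esym (subr0 _))].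
Qed.

Lemma A_theta (th : 'cV[R]_N) e : (A *m th) e 0 = th (src e) 0 - th (dst e) 0.
Proof.
rewrite mxE (bigD1 (src e)) //= (bigD1 (dst e)) /=; last by rewrite eq_sym sd.
rewrite big1 ?addr0; last first.
  by move=> k /andP[/negbTE k1 /negbTE k2]; rewrite mxE k1 k2 mul0r.
by rewrite !mxE eqxx eq_sym (negbTE (sd e)) eqxx mul1r mulN1r.
Qed.

Definition strict : rel 'I_N := fun k l =>
  [exists e, ((0 < f e 0) && (src e == k) && (dst e == l)) ||
             ((f e 0 < 0) && (dst e == k) && (src e == l))].
Definition weak : rel 'I_N := fun k l =>
  [exists e, (f e 0 == 0) && (((src e == k) && (dst e == l)) ||
             ((src e == l) && (dst e == k)))].
Definition good : rel 'I_N := fun k l => strict k l || weak k l.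

Definition flow (n : 'cV[R]_E) (k l : 'I_N) :=
  A^T *m n = dl k - dl l /\ forall e, 0 <= f e 0 * n e 0.

Lemma strict_flow k l : strict k l -> exists n e, flow n k l /\ 0 < f e 0 * n e 0.
Proof.
move=> /existsP[e /orP[/andP[/andP[fp /eqP<-] /eqP<-]|/andP[/andP[fn /eqP<-] /eqP<-]]].
- exists (delta_mx e 0), e; split; last by rewrite mxE !eqxx mulr1.
  split; first exact: AT_delta.
  move=> i; rewrite mxE; case: (i == e) / eqP => [->|]; last by rewrite mulr0.
  by rewrite eqxx mulr1 ltW.
- exists (- delta_mx e 0), e; split; last by rewrite !mxE !eqxx mulrN1 oppr_gt0.
  split; first by rewrite mulmxN AT_delta opprB.
  move=> i; rewrite !mxE; case: (i == e) / eqP => [->|]; last by rewrite oppr0 mulr0.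
  by rewrite eqxx mulrN1 oppr_ge0 ltW.
Qed.

Lemma good_flow k l : good k l -> exists n, flow n k l.
Proof.
case/orP; first by case/strict_flow=> n [e [H _]]; exists n.
move=> /existsP[e /andP[/eqP f0 /orP[/andP[/eqP<- /eqP<-]|/andP[/eqP<- /eqP<-]]]].
- exists (delta_mx e 0); split; first exact: AT_delta.
  by move=> i; rewrite mxE; case: (i == e) / eqP => [->|]; rewrite ?f0 ?mul0r ?mulr0.
- exists (- delta_mx e 0); split; first by rewrite mulmxN AT_delta opprB.
  by move=> i; rewrite !mxE; case: (i == e) / eqP => [->|]; rewrite ?f0 ?mul0r ?oppr0 ?mulr0.
Qed.

Lemma connect_flow k l : connect good k l -> exists n, flow n k l.
Proof.
move=> /connectP[p]; elim: p k => [|z p IH] k /=.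
  by move=> _ ->; exists 0; split; [rewrite mulmx0 subrr | move=> e; rewrite mxE mulr0].
move=> /andP[gz pz] el; have [n1 [H1 P1]] := good_flow gz.
have [n2 [H2 P2]] := IH z pz el.
exists (n1 + n2); split; first by rewrite mulmxDr H1 H2 addrA subrK.
by move=> e; rewrite mxE mulrDr addr_ge0.
Qed.


Lemma tri (V : zmodType) (x y z : V) : (x - y) + (y - z) + (z - x) = 0.
Proof. by rewrite [x - y + _]addrA subrK addrA subrK subrr. Qed.

Hypothesis H : forall n : 'cV[R]_E, A^T *m n = 0 ->
      hadamard f n = 0 \/
      exists i j : 'I_E, 0 < hadamard f n i 0 /\ hadamard f n j 0 < 0.

Definition reach k l := [exists a, [exists b, [&& connect good k a, strict a b & connect good b l]]].

Lemma no_reach k : ~~ reach k k.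
Proof.
apply/negP => /existsP[a /existsP[b /and3P[c1 s c3]]].
have [n1 [H1 P1]] := connect_flow c1.
have [n2 [e [[H2 P2] Pe]]] := strict_flow s.
have [n3 [H3 P3]] := connect_flow c3.
have P : forall i, 0 <= f i 0 * (n1+n2+n3) i 0.
  by move=> i; rewrite !mxE !mulrDr !addr_ge0.
have Q : 0 < f e 0 * (n1+n2+n3) e 0.
  rewrite !mxE !mulrDr; have := P1 e; have := P3 e; lra.
case: (H (n:=n1+n2+n3)).
- by rewrite !mulmxDr H1 H2 H3 tri.
- move=> /matrixP/(_ e 0); rewrite /hadamard !mxE => h.
  by move: Q; rewrite !mxE h ltxx.
- move=> [i [j [_]]]; rewrite /hadamard mxE; have := P j; lra.
Qed.

Lemma reach_sub k k' : connect good k k' -> [set l | reach k' l] \subset [set l | reach k l].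
Proof.
move=> c; apply/subsetP => l; rewrite !inE => /existsP[a /existsP[b /and3P[c1 s c3]]].
apply/existsP; exists a; apply/existsP; exists b.
by rewrite s c3 (connect_trans c c1).
Qed.

Lemma strict_card k l : strict k l -> (#|[set m | reach l m]| < #|[set m | reach k m]|)%N.
Proof.
move=> s; apply: proper_card; apply/properP; split.
  by apply: reach_sub; apply: connect1; rewrite /good s.
exists l; rewrite inE ?(negbTE (no_reach l)) //.
by apply/existsP; exists k; apply/existsP; exists l; rewrite s !connect0.
Qed.

Definition theta : 'cV[R]_N := \col_k (#|[set m | reach k m]|%:R).

Lemma edge_val e : [/\ f e 0 < 0 -> (A *m theta) e 0 < 0,
                      0 < f e 0 -> 0 < (A *m theta) e 0 &
                      f e 0 = 0 -> (A *m theta) e 0 = 0].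
Proof.
rewrite A_theta !mxE; split.
- move=> fn; rewrite subr_lt0 ltr_nat; apply: strict_card.
  by apply/existsP; exists e; rewrite fn !eqxx orbT.
- move=> fp; rewrite subr_gt0 ltr_nat; apply: strict_card.
  by apply/existsP; exists e; rewrite fp !eqxx.
- move=> f0; suff -> : [set m | reach (src e) m] = [set m | reach (dst e) m] by rewrite subrr.
  apply/eqP; rewrite eqEsubset; apply/andP; split; apply: reach_sub; apply: connect1;
  by rewrite /good; apply/orP; right; apply/existsP; exists e; rewrite f0 !eqxx ?orbT.
Qed.

End P.

Theorem proposition3 (R : realFieldType) (N E : nat)
  (src dst : 'I_E -> 'I_N) (f : 'cV[R]_E) :
  simple_graph src dst ->
  graph_connected src dst ->
  has_cycle src dst ->
  (exists (x : 'cV[R]_E) (theta : 'cV[R]_N),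
      (forall e, 0 < x e 0) /\
      diagc f *m x = incidence R src dst *m theta)
  <->
  (forall n : 'cV[R]_E, (incidence R src dst)^T *m n = 0 ->
      hadamard f n = 0 \/
      exists i j : 'I_E, 0 < hadamard f n i 0 /\ hadamard f n j 0 < 0).
Proof.
move=> [sd _] _ _; split.
- move=> [x [th [xp Hx]]] n Hn.
  have S : \sum_e x e 0 * hadamard f n e 0 = 0.
    have : ((incidence R src dst *m th)^T *m n) 0 0 = 0.
      by rewrite trmx_mul -mulmxA Hn mulmx0 mxE.
    rewrite -Hx mxE => h; apply: (etrans _ h); apply: eq_bigr => e _.
    rewrite /diagc mul_diag_mx !mxE; lra.
  case: (boolP [exists i, 0 < hadamard f n i 0]) => [/existsP[i hi]|np];
  case: (boolP [exists j, hadamard f n j 0 < 0]) => [/existsP[j hj]|nn].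
  + by right; exists i, j.
  + left; apply/matrixP => e z; rewrite (ord1 z) [RHS]mxE.
    have h0 : forall e, 0 <= x e 0 * hadamard f n e 0.
      move=> e'; apply: mulr_ge0; first exact: ltW.
      by rewrite leNgt; apply/negP => h; move/existsP: nn; apply; exists e'.
    have := @psumr_eq0P _ _ _ _ (fun i _ => h0 i) S e isT.
    by move/eqP; rewrite mulf_eq0 gt_eqF //= => /eqP.
  + left; apply/matrixP => e z; rewrite (ord1 z) [RHS]mxE.
    have h0 : forall e, 0 <= - (x e 0 * hadamard f n e 0).
      move=> e'; rewrite -mulrN; apply: mulr_ge0; first exact: ltW.
      by rewrite oppr_ge0 leNgt; apply/negP => h; move/existsP: np; apply; exists e'.
    have S' : \sum_e - (x e 0 * hadamard f n e 0) = 0 by rewrite sumrN S oppr0.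
    have := @psumr_eq0P _ _ _ _ (fun i _ => h0 i) S' e isT.
    by move/eqP; rewrite oppr_eq0 mulf_eq0 gt_eqF //= => /eqP.
  + left; apply/matrixP => e z; rewrite (ord1 z) [RHS]mxE.
    apply/eqP; rewrite eq_le; apply/andP; split.
      by rewrite leNgt; apply/negP => h; move/existsP: np; apply; exists e.
    by rewrite leNgt; apply/negP => h; move/existsP: nn; apply; exists e.
- move=> H.
  exists (\col_e (if f e 0 == 0 then 1 else (incidence R src dst *m theta src dst f) e 0 / f e 0)), (theta src dst f).
  split.
  + move=> e; rewrite mxE; have [En Ep E0] := edge_val sd H e.
    case: (ltrgtP (f e 0) 0) => h.
    * have := En h; move: h.
      set a := (_ *m _) e 0; set b := f e 0 => hb ha.
      by rewrite nmulr_rgt0 // invr_lt0.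
    * by rewrite divr_gt0 // Ep.
    * by [].
  + apply/matrixP => e j; rewrite (ord1 j) /diagc mul_diag_mx.
    have [En Ep E0] := edge_val sd H e.
    move: E0; set a := (incidence R src dst *m _) e 0 => E0.
    rewrite !mxE.
    case: (eqVneq (f e 0) 0) => h.
      by rewrite E0 // h mul0r.
    by rewrite mulrC divfK // /a mxE.
Qed.
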